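(* Let $q=2^f$ with $f\ge4$, let $q_0<q$ be a power of $2$ with $\gcd(q-1,q_0^2-1)=1$, and let $u\in\mathscr{U}_{q,q_0}$. Let $E$ be the pointwise stabilizer in $\mathrm{Aut}(\Gamma_u)$ of the vertex set $K'=\{\varepsilon\}\cup\Omega_\infty$. Then either $E$ is trivial, or $E$ is an elementary abelian $2$-group which leaves every pair $\{\Phi_{a,c},\Phi_{a,c}^{-1}\}$ ($a,c\in\mathbb{F}_q$) invariant.
   Context: For $a,c\in\mathbb{F}_q$ let $\Phi_{a,c}=\begin{bmatrix}1&0&0\\ a&1&0\\ c&a^{q_0}&1\end{bmatrix}$, $K=\{\Phi_{a,c}: a,c\in\mathbb{F}_q\}\le GL(3,\mathbb{F}_q)$ with identity $\varepsilon=\Phi_{0,0}$ and commutator subgroup $K'$; $\Omega_\infty=\{\Phi_{0,c}:c\in\mathbb{F}_q^*\}$ and for $v\in\mathbb{F}_q$, $\Omega_v=\{\Phi_{a,va^{q_0+1}}: a\in\mathbb{F}_q^*\}$. $\Gamma_u=\mathrm{Cay}(K,\Omega_u\cup\Omega_{u+1})$ is the graph with vertex set $K$, $x,y$ adjacent iff $xy^{-1}\in\Omega_u\cup\Omega_{u+1}$. $\mathscr{U}_{q,q_0}$ is the set of $u\in\mathbb{F}_q$ such that (U1) $u=(1+\eta^{q_0})/(\eta+\eta^{q_0})$ for some primitive element $\eta$ of $\mathbb{F}_q$, and (U2) $X^{q_0+1}+uX^{q_0}+(u+1)X+1$ has no roots in $\mathbb{F}_q$. *)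

(* Defs.v *)
From HB Require Import structures.
From mathcomp Require Import all_boot all_order all_algebra all_fingroup all_solvable all_field.
Set Implicit Arguments. Unset Strict Implicit. Unset Printing Implicit Defensive.
Import GRing.Theory.
Local Open Scope ring_scope.

Section SuzukiGraph.
Variables (F : finFieldType) (q0 : nat).

Definition Phi (a c : F) : 'M[F]_3 :=
  \matrix_(i < 3, j < 3)
    match nat_of_ord i, nat_of_ord j with
    | 0, 0 => 1 | 1, 1 => 1 | 2, 2 => 1
    | 1, 0 => a | 2, 0 => c | 2, 1 => a ^+ q0
    | _, _ => 0
    end.

Definition Kset : {set 'M[F]_3} := [set Phi a c | a : F, c : F].

Definition eps : 'M[F]_3 := Phi 0 0.

Definition Omega_inf : {set 'M[F]_3} := [set Phi 0 c | c : F & c != 0].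

Definition Omega (v : F) : {set 'M[F]_3} :=
  [set Phi a (v * a ^+ q0.+1) | a : F & a != 0].

Definition Kprime : {set 'M[F]_3} := eps |: Omega_inf.

Definition adj (u : F) (x y : 'M[F]_3) : bool :=
  x *m invmx y \in Omega u :|: Omega (u + 1).

Definition Kt := {x : 'M[F]_3 | x \in Kset}.

Definition isGraphAut (u : F) (s : {perm Kt}) : bool :=
  [forall x : Kt, forall y : Kt,
     adj u (val (s x)) (val (s y)) == adj u (val x) (val y)].

Definition Estab (u : F) : {set {perm Kt}} :=
  [set s : {perm Kt} | isGraphAut u s &&
     [forall x : Kt, (val x \in Kprime) ==> (s x == x)]].

Definition inU (u : F) : Prop :=
  (exists eta : F, (#|F|.-1).-primitive_root eta /\
     u = (1 + eta ^+ q0) / (eta + eta ^+ q0)) /\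
  (forall x : F,
     ~~ root ('X^(q0.+1) + u *: 'X^q0 + (u + 1) *: 'X + 1 : {poly F}) x).

End SuzukiGraph.

(* Main.v *)
Require Import Defs.
From HB Require Import structures.
From mathcomp Require Import all_boot all_order all_algebra all_fingroup all_solvable all_field.
From mathcomp Require Import ring.
Import GRing.Theory.
Set Implicit Arguments. Unset Strict Implicit.
Local Open Scope ring_scope.

Section S.
Variables (F : finFieldType) (q0 : nat).
Hypothesis q0pos : (0 < q0)%N.
Hypothesis ch2 : 2 \in [pchar F].
Hypothesis pinj : forall x y : F, x ^+ q0.+1 = y ^+ q0.+1 -> x = y.

Lemma Phi_mul0 (a c d : F) : Phi q0 a c *m Phi q0 0 d = Phi q0 a (c + d).
Proof.
apply/matrixP => i j; rewrite !mxE !big_ord_recr big_ord0 /= !mxE.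
case: i => [[|[|[|i]]] Hi] //; case: j => [[|[|[|j]]] Hj] //=;
rewrite ?expr0n ?eqn0Ngt ?q0pos /= ?mul0r ?mulr0 ?mul1r ?mulr1 ?add0r ?addr0 //.
Qed.

Lemma Phi_inv (a c : F) : Phi q0 a c *m Phi q0 a (c + a ^+ q0.+1) = 1%:M.
Proof.
apply/matrixP => i j; rewrite !mxE !big_ord_recr big_ord0 /= !mxE.
case: i => [[|[|[|i]]] Hi] //; case: j => [[|[|[|j]]] Hj] //=;
rewrite ?mul0r ?mulr0 ?mul1r ?mulr1 ?add0r ?addr0 ?(addrr_pchar2 ch2) //.
by rewrite -exprSr addrACA !(addrr_pchar2 ch2).
Qed.

Lemma invPhi (a c : F) : invmx (Phi q0 a c) = Phi q0 a (c + a ^+ q0.+1).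
Proof.
have h := Phi_inv a c; have [uA _] := mulmx1_unit h.
by rewrite -[invmx _]mulmx1 -h mulmxA mulVmx // mul1mx.
Qed.

Lemma invPhi0 (z : F) : invmx (Phi q0 0 z) = Phi q0 0 z.
Proof. by rewrite invPhi expr0n /= addr0. Qed.

Lemma Phi_inj (a b c d : F) : Phi q0 a c = Phi q0 b d -> a = b /\ c = d.
Proof.
move=> E; split.
  by have := congr1 (fun M : 'M[F]_3 => M (@Ordinal 3 1 isT) (@Ordinal 3 0 isT)) E; rewrite !mxE.
by have := congr1 (fun M : 'M[F]_3 => M (@Ordinal 3 2 isT) (@Ordinal 3 0 isT)) E; rewrite !mxE.
Qed.

Lemma inOmega (v a c : F) :
  (Phi q0 a c \in Omega q0 v) = (a != 0) && (c == v * a ^+ q0.+1).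
Proof.
apply/imsetP/andP => [[b Hb E]|[Ha /eqP ->]]; last by exists a; rewrite ?inE.
by rewrite inE in Hb; case: (Phi_inj E) => -> ->; split.
Qed.

Lemma adjZ (u a c z : F) : adj q0 u (Phi q0 a c) (Phi q0 0 z) =
  (a != 0) && ((c + z == u * a ^+ q0.+1) || (c + z == (u + 1) * a ^+ q0.+1)).
Proof. by rewrite /adj invPhi0 Phi_mul0 inE !inOmega andb_orr. Qed.

Lemma c2move (x X Y : F) : (x + X == Y) = (x == Y + X).
Proof.
by apply/eqP/eqP => [<-|->]; rewrite -addrA (addrr_pchar2 ch2) addr0.
Qed.

Lemma pair_alg (A B c e u : F) : A != 0 ->
  (forall z, ((e + z == u*B) || (e + z == (u+1)*B)) =
             ((c + z == u*A) || (c + z == (u+1)*A))) ->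
  A = B /\ (e = c \/ e = c + A).
Proof.
move=> A0 H.
have h1 := H (c + u * A); have h2 := H (c + (u + 1) * A).
have cc : forall w, c + (c + w) = w by move=> w; rewrite addrA (addrr_pchar2 ch2) add0r.
rewrite cc eqxx /= !c2move in h1.
rewrite cc eqxx orbT !c2move in h2.
case/orP: h1 => /eqP E1; case/orP: h2 => /eqP E2.
- have h : (u * B + (c + (u + 1) * A)) - (u * B + (c + u * A)) = A by ring.
  by rewrite -E1 -E2 subrr in h; rewrite -h eqxx in A0.
- have h : ((u + 1) * B + (c + (u + 1) * A)) - (u * B + (c + u * A)) = B + A by ring.
  rewrite -E1 -E2 subrr in h.
  have AB : A = B.
    by move/esym/eqP: h; rewrite addr_eq0 => /eqP ->; rewrite (oppr_pchar2 ch2).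
  split=> //; left; rewrite E1 -AB addrCA (addrr_pchar2 ch2) addr0 //.
- have h : (u * B + (c + (u + 1) * A)) - ((u + 1) * B + (c + u * A)) = A - B by ring.
  rewrite -E1 -E2 subrr in h.
  have AB : A = B by apply/eqP; rewrite -subr_eq0 -h.
  split=> //; right; rewrite E1 -AB.
  have -> : (u + 1) * A + (c + u * A) = c + A + (u * A + u * A) by ring.
  by rewrite (addrr_pchar2 ch2) addr0.
- have h : ((u + 1) * B + (c + (u + 1) * A)) - ((u + 1) * B + (c + u * A)) = A by ring.
  by rewrite -E1 -E2 subrr in h; rewrite -h eqxx in A0.
Qed.


Lemma Phi_in_K (a c : F) : Phi q0 a c \in Kset F q0.
Proof. by apply/imset2P; exists a c; rewrite ?inE. Qed.

Lemma Phi0_Kprime (z : F) : Phi q0 0 z \in Kprime F q0.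
Proof.
rewrite /Kprime; have [->|nz] := eqVneq z 0; first by rewrite setU11.
by rewrite setU1r //; apply/imsetP; exists z; rewrite ?inE.
Qed.

Lemma Kset_Phi x : x \in Kset F q0 -> exists a c, x = Phi q0 a c.
Proof. by case/imset2P => a c _ _ ->; exists a, c. Qed.

Lemma inv_in_K x : x \in Kset F q0 -> invmx x \in Kset F q0.
Proof. by case/Kset_Phi => a [c ->]; rewrite invPhi Phi_in_K. Qed.

Definition zK (z : F) : Kt F q0 := exist _ (Phi q0 0 z) (Phi_in_K 0 z).

Definition winv (y : Kt F q0) : Kt F q0 := exist _ (invmx (val y)) (inv_in_K (valP y)).

Lemma winvK y : winv (winv y) = y.
Proof. by apply: val_inj => /=; rewrite invmxK. Qed.

Lemma Estab_pair u s (x : Kt F q0) : s \in Estab q0 u ->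
  val (s x) = val x \/ val (s x) = invmx (val x).
Proof.
rewrite inE => /andP[/forallP Haut /forallP Hfix].
have fixZ z : s (zK z) = zK z by apply/eqP; exact: (implyP (Hfix (zK z)) (Phi0_Kprime z)).
have [a [c Ex]] := Kset_Phi (valP x).
have [b [e Esx]] := Kset_Phi (valP (s x)).
have [a0|a0] := eqVneq a 0.
  by left; rewrite (eqP (implyP (Hfix x) _)) // Ex a0 Phi0_Kprime.
have H z : adj q0 u (Phi q0 b e) (Phi q0 0 z) = adj q0 u (Phi q0 a c) (Phi q0 0 z).
  by have := Haut x; move/forallP/(_ (zK z))/eqP; rewrite fixZ -Ex -Esx.
have cc : forall w, c + (c + w) = w by move=> w; rewrite addrA (addrr_pchar2 ch2) add0r.
have b0 : b != 0.
  apply/negP => /eqP b0; have := H (c + u * a ^+ q0.+1).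
  by rewrite !adjZ b0 eqxx a0 /= cc eqxx.
have H' z : ((e + z == u * b ^+ q0.+1) || (e + z == (u + 1) * b ^+ q0.+1)) =
            ((c + z == u * a ^+ q0.+1) || (c + z == (u + 1) * a ^+ q0.+1)).
  by have := H z; rewrite !adjZ a0 b0 /=; apply.
have [AB [ec|ec]] := pair_alg (expf_neq0 q0.+1 a0) H'.
  by left; rewrite Esx Ex ec (pinj AB).
by right; rewrite Esx Ex ec invPhi (pinj AB).
Qed.

Lemma Estab_w u s y : s \in Estab q0 u -> s y = y \/ s y = winv y.
Proof. by move=> Hs; case: (Estab_pair y Hs) => E; [left|right]; apply: val_inj. Qed.

Lemma Estab_ww u s y : s \in Estab q0 u -> s (winv y) = winv (s y).
Proof.
move=> Hs; have [E|E] := Estab_w y Hs; have [E'|E'] := Estab_w (winv y) Hs;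
rewrite ?E' ?E ?winvK //; apply: (@perm_inj _ s); rewrite ?E ?E' ?winvK //.
Qed.

Lemma Estab_group (u : F) : group_set (Estab q0 u).
Proof.
apply/group_setP; split.
  rewrite inE; apply/andP; split; apply/forallP => x; [apply/forallP => y|];
  by rewrite !perm1 ?eqxx ?implybT.
move=> s t; rewrite !inE => /andP[/forallP As /forallP Fs] /andP[/forallP At /forallP Ft].
apply/andP; split; apply/forallP => x; [apply/forallP => y|]; rewrite !permM.
  by rewrite (eqP (forallP (At (s x)) (s y))) (eqP (forallP (As x) y)).
apply/implyP => h; rewrite (eqP (implyP (Fs x) h)) (implyP (Ft x) h) //.
Qed.

End S.

Lemma expq (F : finFieldType) j (x : F) : x ^+ (j * #|F|.-1 + 1) = x.
Proof.
elim: j => [|j IH]; first by rewrite mul0n add0n expr1.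
rewrite mulSn -addnA exprD IH -exprSr prednK ?expf_card //.
by apply/card_gt0P; exists 0.
Qed.

Lemma pinj_lem (F : finFieldType) (k : nat) : (0 < k)%N -> coprime k #|F|.-1 ->
  forall x y : F, x ^+ k = y ^+ k -> x = y.
Proof.
move=> k0 cop; have [km kn E _] := egcdnP #|F|.-1 k0.
rewrite (eqP cop) in E.
have h (z : F) : z = (z ^+ k) ^+ km by rewrite -exprM mulnC E expq.
by move=> x y Exy; rewrite (h x) Exy -h.
Qed.


Unset Implicit Arguments. Set Strict Implicit.

Theorem lemma8p1 (F : finFieldType) (f q0 : nat) (u : F) :
  #|F| = (2 ^ f)%N -> (4 <= f)%N ->
  (exists e : nat, q0 = (2 ^ e)%N) -> (q0 < 2 ^ f)%N ->
  coprime (2 ^ f - 1) (q0 ^ 2 - 1) ->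
  inU q0 u ->
  Estab q0 u = [set 1%g] \/
  ((2.-abelem (Estab q0 u))%g /\
   forall s, s \in Estab q0 u -> forall a c : F,
     [set val (s y) | y in [set y : Kt F q0 |
        (val y == Phi q0 a c) || (val y == invmx (Phi q0 a c))]]
     = [set Phi q0 a c; invmx (Phi q0 a c)]).
Proof.
move=> hF hf [e he] hq0 hcop hU.
have ch2 : 2 \in [pchar F] by apply: (card_finPcharP hF).
have q0pos : (0 < q0)%N by rewrite he expn_gt0.
have cop : coprime q0.+1 #|F|.-1.
  rewrite coprime_sym hF -subn1; apply: coprime_dvdr hcop.
  have -> : (q0 ^ 2 - 1 = (q0 - 1) * q0.+1)%N.
    by rewrite -[in LHS](exp1n 2) subn_sqr addn1.
  exact: dvdn_mull.
have pinj := pinj_lem (ltn0Sn q0) cop.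
have EW := Estab_w q0pos ch2 pinj.
have EWW := Estab_ww q0pos ch2 pinj.
have EP := Estab_pair q0pos ch2 pinj.
have wK := @winvK F q0 ch2.
right; split.
  apply/(@abelemP _ 2 (Group (Estab_group q0 u))) => //; split.
    apply/centsP => s Hs t Ht; apply/permP => x; rewrite !permM.
    have [E1|E1] := EW _ _ x Hs; have [E2|E2] := EW _ _ x Ht;
    by rewrite ?E1 ?E2 ?(EWW _ _ _ Hs) ?(EWW _ _ _ Ht) ?E1 ?E2 ?wK.
  move=> s Hs; apply/permP => x; rewrite expgS expg1 permM perm1.
  by have [E|E] := EW _ _ x Hs; rewrite E ?(EWW _ _ _ Hs) ?E ?wK.
move=> s Hs a c.
pose y0 : Kt F q0 := exist _ (Phi q0 a c) (Phi_in_K q0 a c).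
apply/setP => M; apply/imsetP/set2P => [[y Hy ->]|HM].
  rewrite inE in Hy; case/orP: Hy => /eqP Hy; case: (EP _ _ y Hs) => ->;
  by rewrite Hy ?invmxK; auto.
have Hy0 : y0 \in [set y : Kt F q0 |
        (val y == Phi q0 a c) || (val y == invmx (Phi q0 a c))] by rewrite inE eqxx.
have Hy1 : winv ch2 y0 \in [set y : Kt F q0 |
        (val y == Phi q0 a c) || (val y == invmx (Phi q0 a c))] by rewrite inE /= eqxx orbT.
case: HM => ->; have [E|E] := EW _ _ y0 Hs.
- by exists y0 => //; rewrite E.
- by exists (winv ch2 y0) => //; rewrite (EWW _ _ _ Hs) E wK.
- by exists (winv ch2 y0) => //; rewrite (EWW _ _ _ Hs) E.
- by exists y0 => //; rewrite E.
Qed.
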